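(* For any pointed irregular type $Q$ with $K=\max_i\mathrm{slope}(q_i)$, the spaces $\mathbf{SB}(Q)$ and $\mathbf B(Q)$ (which are complex manifolds, Zariski open in complex vector spaces) are homotopy equivalent, and $\dim_{\mathbb C}\mathbf{SB}(Q)=\dim_{\mathbb C}\mathbf B(Q)-\lfloor K\rfloor$.
   Context: Exponential factors: finite sums $q=\sum_ka_kx^k$, $a_k\in\mathbb C$, $k\in\mathbb Q_{>0}$; $\mathrm{slope}(q)$ = largest exponent with nonzero coefficient ($0$ if $q=0$); $\mathrm{ram}(q)$ = least $r\ge1$ with $q\in x^{1/r}\mathbb C[x^{1/r}]$. Galois operator $\sigma(\sum a_kx^k)=\sum a_ke^{-2\pi\sqrt{-1}k}x^k$. Pointed irregular type: $Q=[(n_1,q_1),\dots,(n_m,q_m)]$ with $n_i\in\mathbb N_{>0}$, $q_i$ in pairwise distinct Galois orbits; $Q'\sim Q$ means same length and multiplicities and $\mathrm{slope}(\sigma^k(q'_i)-\sigma^l(q'_j))=\mathrm{slope}(\sigma^k(q_i)-\sigma^l(q_j))$ for all $i,j$, $0\le k\le\mathrm{ram}(q_i)$, $0\le l\le\mathrm{ram}(q_j)$. Configuration spaces: $r=\mathrm{lcm}_i\mathrm{ram}(q_i)$, $K=\max_i\mathrm{slope}(q_i)$, $s=rK$; for $\mathbf a\in\mathbb C^{ms}$, $Q_{\mathbf a}=[(n_i,\sum_{j=1}^sa_{i,j}x^{j/r})]_{i=1}^m$. $\mathbf B(Q)=\{\mathbf a:Q_{\mathbf a}\sim Q\}$ with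 subspace topology; $\mathbf{SB}(Q)=\{\mathbf a\in\mathbf B(Q):\mathrm{Tr}(Q_{\mathbf a})=0\}$ where $\mathrm{Tr}([(n_i,p_i)])=\sum_in_i\sum_{t=0}^{\mathrm{ram}(p_i)-1}\sigma^t(p_i)$. *)

(* Defs.v *)
From HB Require Import structures.
From mathcomp Require Import all_boot all_order all_algebra.
From mathcomp Require Import reals trigo.
From mathcomp Require Import complex.
Set Implicit Arguments. Unset Strict Implicit. Unset Printing Implicit Defensive.
Import Order.TTheory GRing.Theory Num.Theory.
Local Open Scope ring_scope.

Section Defs.
Variable R : realType.
Local Notation C := R[i].

(** exp(-2 pi sqrt(-1) k) for rational k *)
Definition emk (k : rat) : C :=
  Complex (cos (2 * pi * ratr k)) (- sin (2 * pi * ratr k)).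

(** Exponential factor: a finite formal sum  sum_p p.2 x^(p.1), represented
    as a list of (exponent, coefficient) pairs (repetitions are summed). *)
Definition expfac := seq (rat * C).

Definition coef (q : expfac) (e : rat) : C := \sum_(p <- q | p.1 == e) p.2.

Definition is_expfac (q : expfac) : bool := all (fun p => 0 < p.1) q.

Definition slope (q : expfac) : rat :=
  \big[Num.max/0]_(p <- q | coef q p.1 != 0) p.1.

Definition ram_pred (q : expfac) (r : nat) : bool :=
  (0 < r)%N && all (fun p => (coef q p.1 != 0) ==> (r%:Q * p.1 \is a Num.int)) q.

Lemma ram_exists q : exists r, ram_pred q r.
Proof.
exists (\prod_(p <- q) `|denq p.1|)%N; apply/andP; split.
  by rewrite prodn_gt0 // => p; rewrite absz_gt0 denq_neq0.
apply/allP => p pq; apply/implyP => _.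
rewrite (big_rem p pq) /= PoszM intrM mulrC mulrA absz_denq -numqE mulrC.
by rewrite -intrM intr_int.
Qed.

(** ram(q) = least r >= 1 with q in x^(1/r) C[x^(1/r)] *)
Definition ram (q : expfac) : nat := ex_minn (ram_exists q).

Definition sigma (q : expfac) : expfac := [seq (p.1, emk p.1 * p.2) | p <- q].
Definition sigman (k : nat) (q : expfac) : expfac := iter k sigma q.
Definition esub (q q' : expfac) : expfac := q ++ [seq (p.1, - p.2) | p <- q'].

Definition eqexp (q q' : expfac) : Prop := forall e, coef q e = coef q' e.

Definition pit := seq (nat * expfac).

Definition is_pit (Q : pit) : Prop :=
  [/\ forall i, (i < size Q)%N -> (0 < (nth (0%N, [::]) Q i).1)%N,
      forall i, (i < size Q)%N -> is_expfac (nth (0%N, [::]) Q i).2 &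
      forall i j, (i < size Q)%N -> (j < size Q)%N -> i <> j ->
        forall k, ~ eqexp (sigman k (nth (0%N, [::]) Q i).2)
                          (nth (0%N, [::]) Q j).2 ].

Definition mult (Q : pit) (i : nat) : nat := (nth (0%N, [::]) Q i).1.
Definition fac (Q : pit) (i : nat) : expfac := (nth (0%N, [::]) Q i).2.

Definition sim (Q' Q : pit) : Prop :=
  [/\ is_pit Q', is_pit Q, size Q' = size Q,
      forall i, (i < size Q)%N -> mult Q' i = mult Q i &
      forall i j k l, (i < size Q)%N -> (j < size Q)%N ->
        (k <= ram (fac Q i))%N -> (l <= ram (fac Q j))%N ->
        slope (esub (sigman k (fac Q' i)) (sigman l (fac Q' j))) =
        slope (esub (sigman k (fac Q i)) (sigman l (fac Q j))) ].

Definition rQ (Q : pit) : nat := \big[lcmn/1%N]_(p <- Q) ram p.2.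
Definition KQ (Q : pit) : rat := \big[Num.max/0]_(p <- Q) slope p.2.
Definition sQ (Q : pit) : nat := `|Num.floor ((rQ Q)%:Q * KQ Q)|%N.

(** Q_a for a = (a_{i,j}) in C^{m s}, m = size Q, j = 1..s (index j : 'I_s stands for j+1) *)
Definition Qa (Q : pit) (a : 'M[C]_(size Q, sQ Q)) : pit :=
  [seq (mult Q i, [seq (((j.+1)%:Q / (rQ Q)%:Q), a i j) | j : 'I_(sQ Q) <- enum 'I_(sQ Q)])
  | i : 'I_(size Q) <- enum 'I_(size Q)].

Definition etrace (Q : pit) : expfac :=
  flatten [seq [seq (e.1, (np.1)%:R * e.2)
               | e <- flatten [seq sigman t np.2 | t <- iota 0 (ram np.2)]]
          | np <- Q].

Definition Bsp (Q : pit) : 'M[C]_(size Q, sQ Q) -> Prop := fun a => sim (@Qa Q a) Q.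
Definition SBsp (Q : pit) : 'M[C]_(size Q, sQ Q) -> Prop :=
  fun a => @Bsp Q a /\ eqexp (etrace (@Qa Q a)) [::].

Definition cabs (z : C) : R := Num.sqrt (complex.Re z ^+ 2 + complex.Im z ^+ 2).
Definition mdist m n (a b : 'M[C]_(m, n)) : R :=
  \sum_(i < m) \sum_(j < n) cabs (a i j - b i j).

Definition cont_on m n m' n' (S : 'M[C]_(m, n) -> Prop)
    (f : 'M[C]_(m, n) -> 'M[C]_(m', n')) : Prop :=
  forall x, S x -> forall e : R, 0 < e -> exists2 d : R, 0 < d &
    forall y, S y -> mdist x y < d -> mdist (f x) (f y) < e.

Definition maps_into m n m' n' (S : 'M[C]_(m, n) -> Prop)
    (T : 'M[C]_(m', n') -> Prop) (f : 'M[C]_(m, n) -> 'M[C]_(m', n')) : Prop :=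
  forall x, S x -> T (f x).

Definition homotopic m n m' n' (S : 'M[C]_(m, n) -> Prop)
    (T : 'M[C]_(m', n') -> Prop) (f g : 'M[C]_(m, n) -> 'M[C]_(m', n')) : Prop :=
  exists H : 'M[C]_(m, n) -> R -> 'M[C]_(m', n'),
    [/\ forall x t, S x -> 0 <= t <= 1 -> T (H x t),
        forall x, S x -> H x 0 = f x,
        forall x, S x -> H x 1 = g x &
        (forall x t, S x -> 0 <= t <= 1 -> forall e : R, 0 < e ->
          exists2 d : R, 0 < d & forall y u, S y -> 0 <= u <= 1 ->
            mdist x y < d -> `|t - u| < d -> mdist (H x t) (H y u) < e) ].

Definition homotopy_equiv m n m' n' (S : 'M[C]_(m, n) -> Prop)
    (T : 'M[C]_(m', n') -> Prop) : Prop :=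
  exists (f : 'M[C]_(m, n) -> 'M[C]_(m', n')) (g : 'M[C]_(m', n') -> 'M[C]_(m, n)),
    [/\ cont_on S f /\ maps_into S T f, cont_on T g /\ maps_into T S g,
        homotopic S S (g \o f) id & homotopic T T (f \o g) id ].

(** S is a (nonempty) open subset of a complex linear subspace of dimension d
    of C^(m x n); this d is then the complex dimension of the manifold S. *)
Definition open_in_subspace_dim m n (S : 'M[C]_(m, n) -> Prop) (d : nat) : Prop :=
  (exists x, S x) /\
  exists k (A : 'M[C]_(k, m * n)),
    [/\ \rank A = d,
        forall x, S x -> (mxvec x <= A)%MS &
        (forall x, S x -> exists2 e : R, 0 < e &
          forall y, (mxvec y <= A)%MS -> mdist x y < e -> S y) ].

End Defs.

(* Main.v *)
Require Import Defs.
From HB Require Import structures.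
From mathcomp Require Import all_boot all_order all_algebra.
From mathcomp Require Import reals trigo.
From mathcomp Require Import complex.
Set Implicit Arguments. Unset Strict Implicit. Unset Printing Implicit Defensive.
Import Order.TTheory GRing.Theory Num.Theory.
Local Open Scope ring_scope.
From mathcomp Require Import ring lra zify.
From mathcomp.algebra_tactics Require Import ring lra.

Section Gen.
Variable R : realType.
Local Notation C := R[i].
Implicit Types (q : expfac R) (e : rat).

Lemma emkD x y : emk R (x + y) = emk R x * emk R y.
Proof.
rewrite /emk.
set a := 2 * pi * ratr x; set b := 2 * pi * ratr y.
have -> : 2 * pi * ratr (x + y) = a + b :> R by rewrite /a /b rmorphD mulrDr.
rewrite cosD sinD.
apply/eqP; rewrite eq_complex /=; apply/andP; split; apply/eqP.
  by rewrite mulrNN.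
by rewrite mulrN mulNr -opprD addrC.
Qed.

Lemma emk0 : emk R 0 = 1.
Proof. by rewrite /emk rmorph0 mulr0 cos0 sin0 oppr0. Qed.
Lemma emk1 : emk R 1 = 1.
Proof.
rewrite /emk rmorph1 mulr1.
have -> : 2 * pi = pi *+ 2 :> R by rewrite mulr_natl.
by rewrite cos2pi sin2pi oppr0.
Qed.

Lemma emkN x : emk R (- x) * emk R x = 1.
Proof. by rewrite -emkD addNr emk0. Qed.

Lemma emk_nat (n : nat) : emk R n%:R = 1.
Proof. elim: n => [|n IH]; first exact: emk0.
by rewrite -addn1 natrD emkD IH emk1 mulr1. Qed.
Lemma emk_int (z : int) : emk R z%:~R = 1.
Proof.
case: z => n; first exact: emk_nat.
rewrite NegzE mulrNz.
have := emkN (n.+1)%:R; rewrite emk_nat mulr1 => <-.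
by [].
Qed.

Lemma emkX e (k : nat) : emk R e ^+ k = emk R (k%:R * e).
Proof.
elim: k => [|k IH]; first by rewrite expr0 mul0r emk0.
by rewrite exprS IH -emkD -{1}[e]mul1r -mulrDl -natr1 addrC.
Qed.
Lemma emk_small g : 0 <= g <= 1/2 -> emk R g = 1 -> g = 0.
Proof.
move=> /andP[g0 g1] /eqP; rewrite eq_complex /= => /andP[/eqP c1 _].
have rg0 : 0 <= ratr g :> R by rewrite -(rmorph0 (ratr : {rmorphism rat -> R})) ler_rat.
have rg1 : ratr g <= 1/2 :> R.
  by rewrite (_ : 1/2 = ratr (1/2)) ?ler_rat // rmorphM rmorph1 fmorphV rmorph_nat.
have pi0 := pi_gt0 R.
have : 2 * pi * ratr g = 0 :> R.
  apply: cos_inj; rewrite ?cos0 //; rewrite in_itv /= ?lexx ?(ltW pi0) //.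
  apply/andP; split; first by rewrite mulr_ge0 // mulr_ge0 // ltW.
  nra.
move=> h.
have h2 : ratr g = 0 :> R.
  have : 2 * pi != 0 :> R by rewrite mulf_neq0 // ?pnatr_eq0 // lt0r_neq0.
  by move=> nz; apply: (mulfI nz); rewrite h mulr0.
apply: (@fmorph_inj _ _ (ratr : {rmorphism rat -> R})).
exact: (etrans h2 (esym (rmorph0 _))).
Qed.
Lemma emk_eq1 e : emk R e = 1 -> e \is a Num.int.
Proof.
move=> he.
set n := Num.floor e; set f := e - n%:~R.
have f0 : 0 <= f by rewrite subr_ge0 floor_le.
have f1 : f < 1 by have := floorD1_gt e; rewrite intrD /f -/n => ?; lra.
have hf : emk R f = 1 by rewrite /f emkD he -mulrNz emk_int mulr1.
have [fs|fl] := leP f (1/2).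
  have := emk_small (introT andP (conj f0 fs)) hf => /eqP.
  by rewrite subr_eq0 => /eqP ->; rewrite intr_int.
have hg : emk R (1 - f) = 1.
  by rewrite emkD emk1 mul1r -(emkN f) hf mulr1.
have g0 : 0 <= 1 - f <= 1/2.
  apply/andP; split; lra.
by have := emk_small g0 hg => /eqP; rewrite subr_eq0 => /eqP f1'; rewrite -f1' ltxx in f1.
Qed.
Lemma emkX_eq1 e (k : nat) : (emk R e ^+ k == 1) = (k%:Q * e \is a Num.int).
Proof.
rewrite emkX; have -> : (k%:R * e) = k%:Q * e by [].
apply/eqP/idP => [/emk_eq1 //|hi].
by rewrite -(floorK hi) emk_int.
Qed.
Lemma cabsE (z : C) : cabs z = Normc.normc z.
Proof. by case: z. Qed.

Lemma cabs_ge0 (z : C) : 0 <= cabs z.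
Proof. exact: sqrtr_ge0. Qed.

Lemma cabsD (x y : C) : cabs (x + y) <= cabs x + cabs y.
Proof. rewrite !cabsE; exact: le_normcD. Qed.

Lemma cabsM (x y : C) : cabs (x * y) = cabs x * cabs y.
Proof. rewrite !cabsE; exact: Normc.normcM. Qed.

Lemma cabsN (x : C) : cabs (- x) = cabs x.
Proof. rewrite !cabsE; exact: normcN. Qed.

Lemma cabs0 : cabs (0 : C) = 0.
Proof. by rewrite cabsE Normc.normc0. Qed.

Lemma cabs_eq0 (z : C) : cabs z = 0 -> z = 0.
Proof. rewrite cabsE; exact: Normc.eq0_normc. Qed.
Lemma cabs_real (t : R) : cabs ((t%:C)%C) = `|t|.
Proof. by rewrite /cabs /= expr0n /= addr0 sqrtr_sqr. Qed.

Lemma cabs_emk e : cabs (emk R e) = 1.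
Proof. by rewrite /cabs /= sqrrN cos2Dsin2 sqrtr1. Qed.

Lemma cabsB (x y : C) : cabs (x - y) = cabs (y - x).
Proof. by rewrite -cabsN opprB. Qed.
Lemma coef_nil e : coef ([::] : expfac R) e = 0.
Proof. by rewrite /coef big_nil. Qed.

Lemma coef_cat q1 q2 e : coef (q1 ++ q2) e = coef q1 e + coef q2 e.
Proof. by rewrite /coef big_cat. Qed.

Lemma coef_map_scale (f : rat -> C) q e :
  coef [seq (p.1, f p.1 * p.2) | p <- q] e = f e * coef q e.
Proof.
rewrite /coef big_map /= mulr_sumr; apply: eq_bigr => p /eqP -> //.
Qed.

Lemma coef_sigma q e : coef (sigma q) e = emk R e * coef q e.
Proof. exact: coef_map_scale. Qed.

Lemma coef_sigman k q e : coef (sigman k q) e = emk R e ^+ k * coef q e.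
Proof.
elim: k => [|k IH]; first by rewrite expr0 mul1r.
by rewrite /sigman iterS -/(sigman k q) coef_sigma IH exprS mulrA.
Qed.

Lemma coef_esub q q' e : coef (esub q q') e = coef q e - coef q' e.
Proof.
rewrite /esub coef_cat; congr (_ + _).
rewrite /coef big_map /= -sumrN; apply: eq_bigr => p //.
Qed.

Lemma coef_flatten (ss : seq (expfac R)) e :
  coef (flatten ss) e = \sum_(s <- ss) coef s e.
Proof.
elim: ss => [|s ss IH]; first by rewrite big_nil coef_nil.
by rewrite /= coef_cat IH big_cons.
Qed.

Lemma coef_nz_in q e : coef q e != 0 -> exists2 p, p \in q & p.1 = e.
Proof.
have [/hasP[p pq /eqP pe]|/hasPn hn] := boolP (has (fun p : rat * C => p.1 == e) q).
  by move=> _; exists p.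
rewrite /coef big_seq_cond big1 ?eqxx // => p /andP[pq pe].
by rewrite (negbTE (hn p pq)) in pe.
Qed.
Lemma bigmax_att (r : seq (rat * C)) (P : pred (rat * C)) :
  let m := \big[Num.max/0]_(p <- r | P p) p.1 in
  m = 0 \/ exists2 p, p \in r & P p /\ p.1 = m.
Proof.
elim: r => [|a r IH] /=; first by left; rewrite big_nil.
rewrite big_cons; case: ifP => Pa; last first.
  case: IH => [->|[p pr [Pp pe]]]; [by left|right; exists p => //].
  by rewrite inE pr orbT.
set m := \big[Num.max/0]_(p <- r | P p) p.1 in IH *.
rewrite /Num.max; case: ifP => _.
  case: IH => [->|[p pr [Pp pe]]]; [by left|right; exists p => //].
  by rewrite inE pr orbT.
by right; exists a; rewrite ?inE ?eqxx.
Qed.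

Lemma slope_ge0 q : 0 <= slope q.
Proof. exact: bigmax_ge_id. Qed.
Lemma slope_ub q e : coef q e != 0 -> e <= slope q.
Proof.
move=> /[dup] nz /coef_nz_in [p pq pe]; rewrite -pe.
by apply: (le_bigmax_seq 0 p (fun p : rat * C => coef q p.1 != 0) (fun p : rat * C => p.1) pq); rewrite /= pe.
Qed.
Lemma slope_att q : slope q = 0 \/ coef q (slope q) != 0.
Proof.
case: (bigmax_att q (fun p => coef q p.1 != 0)) => /= h; first by left.
by right; case: h => p _ [Pp pe]; rewrite /slope -pe.
Qed.

Lemma slope_le q c : 0 <= c -> (forall e, coef q e != 0 -> e <= c) -> slope q <= c.
Proof. by move=> c0 h; apply: bigmax_le => // p /h. Qed.

Lemma slope_char q c : 0 <= c -> (forall e, coef q e != 0 -> e <= c) ->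
  (c = 0 \/ coef q c != 0) -> slope q = c.
Proof.
move=> c0 h hc; apply: le_anti; rewrite slope_le //=.
by case: hc => [->|/slope_ub]; rewrite ?slope_ge0.
Qed.
Lemma slope_ext q q' : (forall e, coef q e = coef q' e) -> slope q = slope q'.
Proof.
move=> h; apply: slope_char; first exact: slope_ge0.
  by move=> e; rewrite h; apply: slope_ub.
by case: (slope_att q') => ?; [left|right; rewrite h].
Qed.

Lemma slope_eq0 q : (forall e, coef q e != 0 -> 0 < e) -> slope q = 0 ->
  forall e, coef q e = 0.
Proof.
move=> hpos h0 e; apply/eqP; apply/negP => /negP nz.
by have := slope_ub nz; rewrite h0 leNgt hpos.
Qed.
Lemma ram_predP q r : ram_pred q r <->
  (0 < r)%N /\ forall e, coef q e != 0 -> r%:Q * e \is a Num.int.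
Proof.
split.
  move=> /andP[r0 /allP h]; split => // e /[dup] nz /coef_nz_in [p pq pe].
  by move: (h p pq) => /implyP; rewrite pe; apply.
move=> [r0 h]; apply/andP; split => //; apply/allP => p pq; apply/implyP.
exact: h.
Qed.

Lemma ram_spec q : ram_pred q (ram q) /\ forall r, ram_pred q r -> (ram q <= r)%N.
Proof. rewrite /ram; case: ex_minnP => m Pm Hm; split => //. Qed.

Lemma ram_gt0 q : (0 < ram q)%N.
Proof. by case: (ram_spec q) => /ram_predP []. Qed.

Lemma ram_ext q q' : (forall e, coef q e = coef q' e) -> ram q = ram q'.
Proof.
move=> h.
have H : forall r, ram_pred q r <-> ram_pred q' r.
  move=> r; rewrite !ram_predP; split => -[r0 hr]; split => // e.
    by rewrite -h; apply: hr.
  by rewrite h; apply: hr.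
case: (ram_spec q) => P1 M1; case: (ram_spec q') => P2 M2.
apply/eqP; rewrite eqn_leq M1 ?M2 //; [by apply/H | by apply/H].
Qed.

Lemma sigma_fixP q k :
  (forall e, emk R e ^+ k * coef q e = coef q e) <->
  (forall e, coef q e != 0 -> k%:Q * e \is a Num.int).
Proof.
split.
  move=> h e nz; rewrite -emkX_eq1; apply/eqP.
  apply: (mulIf nz); rewrite mul1r; exact: h.
move=> h e; have [->|nz] := eqVneq (coef q e) 0; first by rewrite mulr0.
by have := h e nz; rewrite -emkX_eq1 => /eqP ->; rewrite mul1r.
Qed.
Definition posf q := forall e, coef q e != 0 -> 0 < e.

Lemma sigma_ram q e : emk R e ^+ ram q * coef q e = coef q e.
Proof. by move: e; apply/sigma_fixP; case: (ram_spec q) => /ram_predP []. Qed.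

Lemma sigma_fix_ram q k : (0 < k)%N ->
  (forall e, emk R e ^+ k * coef q e = coef q e) -> (ram q <= k)%N.
Proof.
move=> k0 /sigma_fixP h; case: (ram_spec q) => _; apply; apply/ram_predP; split=> //.
Qed.
Lemma sigma_mod q k e : emk R e ^+ k * coef q e = emk R e ^+ (k %% ram q) * coef q e.
Proof.
rewrite {1}(divn_eq k (ram q)) exprD [X in X * _]mulrC -mulrA; congr (_ * _).
elim: (k %/ ram q)%N => [|n IH]; first by rewrite mul0n expr0 mul1r.
by rewrite mulSn exprD -mulrA IH sigma_ram.
Qed.

Lemma posf_esub_sigman q q' k l : posf q -> posf q' ->
  posf (esub (sigman k q) (sigman l q')).
Proof.
move=> hq hq' e; rewrite coef_esub !coef_sigman.
have [nz|z] := eqVneq (coef q e) 0; last by move=> _; exact: hq.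
rewrite nz mulr0 sub0r oppr_eq0 mulf_eq0 negb_or => /andP[_]; exact: hq'.
Qed.

Lemma slope_zero q : (forall e, coef q e = 0) -> slope q = 0.
Proof. by move=> h; apply: slope_char => // [e|]; rewrite ?h ?eqxx //; left. Qed.
Lemma ram_sim q q' : posf q -> posf q' ->
  (forall k, (k <= ram q)%N ->
     slope (esub (sigman k q') (sigman 0 q')) = slope (esub (sigman k q) (sigman 0 q))) ->
  ram q' = ram q.
Proof.
move=> pq pq' hs.
have fix0 : forall (x : expfac R) k, posf x -> slope (esub (sigman k x) (sigman 0 x)) = 0 ->
    forall e, emk R e ^+ k * coef x e = coef x e.
  move=> x k px h0 e; apply/eqP; rewrite -subr_eq0; apply/eqP.
  have := slope_eq0 (posf_esub_sigman (k:=k) (l:=0) px px) h0 e.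
  by rewrite coef_esub !coef_sigman expr0 mul1r.
have slope0 : forall (x : expfac R) k, (forall e, emk R e ^+ k * coef x e = coef x e) ->
    slope (esub (sigman k x) (sigman 0 x)) = 0.
  move=> x k h; apply: slope_zero => e.
  by rewrite coef_esub !coef_sigman expr0 mul1r h subrr.
apply/eqP; rewrite eqn_leq; apply/andP; split.
  apply: sigma_fix_ram; first exact: ram_gt0.
  apply: fix0 => //; rewrite hs //; apply: slope0; exact: sigma_ram.
have r'le : (ram q' <= ram q)%N.
  apply: sigma_fix_ram; first exact: ram_gt0.
  apply: fix0 => //; rewrite hs //; apply: slope0; exact: sigma_ram.
apply: sigma_fix_ram; first exact: ram_gt0.
apply: fix0 => //; rewrite -hs //; apply: slope0; exact: sigma_ram.
Qed.
Lemma biglcm_dvd (s : pit R) p : p \in s -> (ram p.2 %| \big[lcmn/1%N]_(x <- s) ram x.2)%N.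
Proof.
elim: s => [|x s IH] //; rewrite inE big_cons => /predU1P[->|ps].
  exact: dvdn_lcml.
exact: dvdn_trans (IH ps) (dvdn_lcmr _ _).
Qed.

Lemma biglcm_gt0 (s : pit R) : (0 < \big[lcmn/1%N]_(x <- s) ram x.2)%N.
Proof.
elim: s => [|x s IH]; first by rewrite big_nil.
by rewrite big_cons lcmn_gt0 IH ram_gt0.
Qed.

Lemma intr_dvd (d n : nat) e : (d %| n)%N -> d%:Q * e \is a Num.int -> n%:Q * e \is a Num.int.
Proof.
move=> /dvdnP [c ->] h.
have -> : (c * d)%N%:Q * e = c%:Q * (d%:Q * e) by rewrite PoszM intrM mulrA.
by rewrite rpredM // intr_int.
Qed.
Lemma mxvec_dot m n (X Y : 'M[C]_(m, n)) :
  \sum_(idx < m * n) (mxvec X) 0 idx * (mxvec Y) 0 idx = \sum_i \sum_j X i j * Y i j.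
Proof.
rewrite (reindex _ (curry_mxvec_bij _ _)) /= pair_bigA.
by apply: eq_bigr => [[i j]] _ /=; rewrite !mxvecE.
Qed.
Lemma sum_delta m n (X : 'M[C]_(m, n)) i0 j0 :
  \sum_i \sum_j X i j * (delta_mx i0 j0 : 'M[C]_(m, n)) i j = X i0 j0.
Proof.
rewrite (bigD1 i0) //= [X in _ + X]big1 ?addr0; last first.
  move=> i ni; apply: big1 => j _; by rewrite mxE (negbTE ni) mulr0.
rewrite (bigD1 j0) //= [X in _ + X]big1 ?addr0; last first.
  move=> j nj; by rewrite mxE (negbTE nj) andbF mulr0.
by rewrite mxE !eqxx mulr1.
Qed.
End Gen.

Section Main.
Variable R : realType.
Local Notation C := R[i].
Variable Q : pit R.
Hypothesis HQ : is_pit Q.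
Local Notation m := (size Q).
Local Notation r := (rQ Q).
Local Notation s := (sQ Q).
Local Notation K := (KQ Q).

Definition gr (j : nat) : rat := (j.+1)%:Q / r%:Q.
Definition rowl (a : 'M[C]_(m, s)) (i : 'I_m) : expfac R :=
  [seq ((j.+1)%:Q / r%:Q, a i j) | j : 'I_s <- enum 'I_s].

Lemma r_gt0 : (0 < r)%N.
Proof. exact: biglcm_gt0. Qed.

Lemma rQ_neq0 : r%:Q != 0.
Proof. by rewrite pnatr_eq0 -lt0n r_gt0. Qed.

Lemma gr_gt0 j : 0 < gr j.
Proof. by rewrite /gr divr_gt0 // ltr0n r_gt0. Qed.

Lemma gr_inj j j' : gr j = gr j' -> j = j'.
Proof.
rewrite /gr => /(mulIf (invr_neq0 rQ_neq0)) /eqP.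
by rewrite eqr_int => /eqP [].
Qed.
Lemma coef_rowl a i (j : 'I_s) : coef (rowl a i) (gr j) = a i j.
Proof.
rewrite /coef /rowl big_map /= big_enum_cond /=.
rewrite (bigD1 j) /= ?eqxx // big1 ?addr0 // => j' /andP[/eqP hj nj].
by move: nj; rewrite (val_inj (gr_inj hj)) eqxx.
Qed.
Lemma coef_rowl0 a i e : (forall j : 'I_s, gr j != e) -> coef (rowl a i) e = 0.
Proof.
move=> h; rewrite /coef /rowl big_map /= big1_seq // => j /andP[hj _].
by have := h j; rewrite /gr hj.
Qed.
Lemma grid_of e : 0 < e -> r%:Q * e \is a Num.int -> e <= K -> exists j : 'I_s, gr j = e.
Proof.
move=> e0 hi eK.
have hn := floorK hi; move: hn; set n := Num.floor (r%:Q * e) => hn.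
have n0 : (0 : rat) < n%:~R by rewrite hn mulr_gt0 // ltr0n r_gt0.
rewrite ltr0z in n0.
have hK : n <= Num.floor (r%:Q * K).
  by rewrite floor_ge_int hn ler_pM2l // ltr0n r_gt0.
move: hn n0 hK; case: n => [n'|//] hn n0 hK.
have ns : (n'.-1 < s)%N.
  rewrite /sQ; move: hK; case: (Num.floor _) => [k|//].
  by rewrite lez_nat /= => h; rewrite prednK // -?ltz_nat.
exists (Ordinal ns); rewrite /gr /= prednK; last by rewrite -ltz_nat.
apply: (mulfI rQ_neq0); rewrite mulrC divfK ?rQ_neq0 //.
Qed.
Lemma facQ_pos (i : nat) : (i < m)%N -> posf (fac Q i).
Proof.
case: HQ => _ he _ hi e /coef_nz_in [p pq <-].
by have := he i hi; rewrite /is_expfac => /allP /(_ p pq).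
Qed.

Lemma facQ_grid (i : nat) e : (i < m)%N -> coef (fac Q i) e != 0 -> exists j : 'I_s, gr j = e.
Proof.
move=> hi nz; apply: grid_of; first exact: facQ_pos nz.
  have [/ram_predP [_ h] _] := ram_spec (fac Q i).
  apply: (intr_dvd _ (h e nz)); rewrite /fac.
  exact: biglcm_dvd (mem_nth _ hi).
apply: le_trans (slope_ub nz) _; rewrite /KQ /fac.
exact: (le_bigmax_seq 0 (nth (0%N, [::]) Q i) xpredT (fun p => slope p.2) (mem_nth _ hi)).
Qed.

Definition a0 : 'M[C]_(m, s) := \matrix_(i, j) coef (fac Q i) (gr j).
Lemma coef_a0 (i : 'I_m) e : coef (rowl a0 i) e = coef (fac Q i) e.
Proof.
have [/existsP [j /eqP <-]|/existsPn nj] := boolP [exists j : 'I_s, gr j == e].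
  by rewrite coef_rowl mxE.
rewrite coef_rowl0 //.
apply/esym/eqP/negP => /negP nz; have [j hj] := facQ_grid (ltn_ord i) nz.
by have := nj j; rewrite hj eqxx.
Qed.
Lemma Qa_nth a (i : 'I_m) : nth (0%N, [::]) (Qa a) i = (mult Q i, rowl a i).
Proof. by rewrite /Qa (nth_map i) ?size_enum_ord // nth_ord_enum. Qed.
Lemma size_Qa (a : 'M[C]_(m, s)) : size (Qa a) = m.
Proof. by rewrite /Qa size_map size_enum_ord. Qed.

Lemma rowl_pos a i : posf (rowl a i).
Proof.
move=> e nz; have [/existsP [j /eqP <-]|/existsPn nj] := boolP [exists j : 'I_s, gr j == e].
  exact: gr_gt0.
by rewrite coef_rowl0 ?eqxx in nz.
Qed.

Definition Dl a (i j : 'I_m) k l := esub (sigman k (rowl a i)) (sigman l (rowl a j)).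
Definition cst (i j : 'I_m) k l := slope (Dl a0 i j k l).
Definition Cond a := forall (i j : 'I_m) k l, (k <= ram (fac Q i))%N -> (l <= ram (fac Q j))%N ->
  slope (Dl a i j k l) = cst i j k l.

Lemma Dl_coef a i j k l e : coef (Dl a i j k l) e =
  emk R e ^+ k * coef (rowl a i) e - emk R e ^+ l * coef (rowl a j) e.
Proof. by rewrite coef_esub !coef_sigman. Qed.
Lemma Dl_pos a i j k l : posf (Dl a i j k l).
Proof. by apply: posf_esub_sigman; apply: rowl_pos. Qed.

Lemma Dl_a0 i j k l e : coef (Dl a0 i j k l) e =
  coef (esub (sigman k (fac Q i)) (sigman l (fac Q j))) e.
Proof. by rewrite Dl_coef coef_esub !coef_sigman !coef_a0. Qed.

Lemma per_mod (x : expfac R) p : (forall e, emk R e ^+ p * coef x e = coef x e) ->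
  forall k e, emk R e ^+ k * coef x e = emk R e ^+ (k %% p) * coef x e.
Proof.
move=> hp k e.
rewrite {1}(divn_eq k p) exprD [X in X * _]mulrC -mulrA; congr (_ * _).
elim: (k %/ p)%N => [|n IH]; first by rewrite mul0n expr0 mul1r.
by rewrite mulSn exprD -mulrA IH hp.
Qed.
Lemma fac_Qa a (i : 'I_m) : fac (Qa a) i = rowl a i.
Proof. by rewrite /fac Qa_nth. Qed.

Lemma Bsp_Cond a : Bsp a -> Cond a.
Proof.
case=> _ _ _ _ hs i j k l hk hl.
have := hs i j k l (ltn_ord i) (ltn_ord j) hk hl.
rewrite !fac_Qa => ->; rewrite /cst; apply: slope_ext => e.
by rewrite Dl_a0.
Qed.
Lemma Cond_per a (i : 'I_m) : Cond a ->
  forall e, emk R e ^+ ram (fac Q i) * coef (rowl a i) e = coef (rowl a i) e.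
Proof.
move=> hc e; apply/eqP; rewrite -subr_eq0; apply/eqP.
have h0 : slope (Dl a i i (ram (fac Q i)) 0) = 0.
  rewrite hc // /cst; apply: slope_zero => e'.
  by rewrite Dl_a0 coef_esub !coef_sigman expr0 mul1r sigma_ram subrr.
by have := slope_eq0 (@Dl_pos a i i _ 0) h0 e; rewrite Dl_coef expr0 mul1r.
Qed.
Lemma Cond_distinct a : Cond a -> forall (i j : 'I_m), i != j -> forall k,
  ~ eqexp (sigman k (rowl a i)) (rowl a j).
Proof.
move=> hc i j nij k heq.
have hp := Cond_per i hc.
set ri := ram (fac Q i).
have kle : (k %% ri <= ri)%N by apply: ltnW; rewrite ltn_mod ram_gt0.
have h0 : slope (Dl a i j (k %% ri) 0) = 0.
  apply: slope_zero => e; rewrite Dl_coef expr0 mul1r -per_mod //.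
  by rewrite -coef_sigman heq subrr.
have := hc i j (k %% ri)%N 0%N kle (leq0n _); rewrite h0 /cst => /esym h1.
have h2 := slope_eq0 (@Dl_pos a0 i j _ 0) h1.
case: HQ => _ _ hd; apply: (hd i j (ltn_ord i) (ltn_ord j) _ (k %% ri)%N).
  by move=> ij; move: nij; rewrite (val_inj ij) eqxx.
move=> e; have := h2 e; rewrite Dl_a0 coef_esub !coef_sigman expr0 mul1r.
by move/eqP; rewrite subr_eq0 => /eqP.
Qed.
Lemma Cond_Bsp a : Cond a -> Bsp a.
Proof.
move=> hc; have [Hm He Hd] := HQ.
split => //; last first.
- move=> i j k l hi hj hk hl.
  have := hc (Ordinal hi) (Ordinal hj) k l hk hl.
  rewrite (fac_Qa a (Ordinal hi)) (fac_Qa a (Ordinal hj)) => ->.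
  rewrite /cst; apply: slope_ext => e; by rewrite Dl_a0.
- by move=> i hi; rewrite /mult (Qa_nth a (Ordinal hi)).
- exact: size_Qa.
split; rewrite size_Qa.
- by move=> i hi; rewrite (Qa_nth a (Ordinal hi)) /=; apply: Hm.
- move=> i hi; rewrite (Qa_nth a (Ordinal hi)) /=.
  apply/allP => p /mapP [j _ ->] /=; exact: gr_gt0.
- move=> i j hi hj nij k.
  rewrite (Qa_nth a (Ordinal hi)) (Qa_nth a (Ordinal hj)) /=.
  apply: Cond_distinct => //; apply/eqP => /(congr1 val) /= h; exact: nij.
Qed.
Lemma gr_int j : (gr j \is a Num.int) = (r %| j.+1)%N.
Proof.
apply/idP/idP => [hi|/dvdnP [c hc]]; last first.
  by rewrite /gr hc PoszM intrM mulfK ?rQ_neq0 // intr_int.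
have := floorK hi; set z := Num.floor (gr j) => hz.
have h : (j.+1)%:Q = z%:~R * r%:Q by rewrite hz /gr divfK ?rQ_neq0.
have : Posz j.+1 = z * Posz r by apply: (@intr_inj rat); rewrite intrM -h.
case: z {hz h} => [z'|z'] /=.
  by rewrite -PoszM => -[->]; apply: dvdn_mull.
move=> h; exfalso; have := r_gt0; move: h; nia.
Qed.
Lemma emk_gr_int j : (r %| j.+1)%N -> emk R (gr j) = 1.
Proof. by rewrite -gr_int => /floorK <-; rewrite emk_int. Qed.

Definition shift (a : 'M[C]_(m, s)) (p : 'I_s -> C) : 'M[C]_(m, s) :=
  \matrix_(i, j) (a i j - p j).
Definition intp (p : 'I_s -> C) := forall j : 'I_s, ~~ (r %| j.+1)%N -> p j = 0.

Lemma Dl_shift a p i j k l e : intp p ->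
  coef (Dl (shift a p) i j k l) e = coef (Dl a i j k l) e.
Proof.
move=> hp; rewrite !Dl_coef.
have [/existsP [j0 /eqP <-]|/existsPn nj] := boolP [exists j0 : 'I_s, gr j0 == e].
  rewrite !coef_rowl !mxE; have [h|h] := boolP (r %| j0.+1)%N.
    by rewrite emk_gr_int // !expr1n !mul1r opprB addrA subrK.
  by rewrite hp // !subr0.
by rewrite !coef_rowl0.
Qed.

Lemma Cond_shift a p : intp p -> Cond (shift a p) <-> Cond a.
Proof.
move=> hp; split => hc i j k l hk hl; rewrite -(hc i j k l hk hl);
  apply: slope_ext => e; by rewrite Dl_shift.
Qed.
Lemma coef_trace a e : coef (etrace (Qa a)) e = \sum_(i < m) (mult Q i)%:R *
  \sum_(t < ram (rowl a i)) emk R e ^+ t * coef (rowl a i) e.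
Proof.
rewrite /etrace coef_flatten big_map /Qa big_map big_enum /=; apply: eq_bigr => i _.
rewrite (coef_map_scale (fun _ => (mult Q i)%:R)) /=; congr (_ * _).
rewrite coef_flatten big_map.
rewrite (_ : iota 0 _ = index_iota 0 (ram (rowl a i))); last by rewrite /index_iota subn0.
rewrite big_mkord.
by apply: eq_bigr => t _; rewrite coef_sigman.
Qed.
Lemma Cond_ram a (i : 'I_m) : Cond a -> ram (rowl a i) = ram (fac Q i).
Proof.
move=> hc; apply: ram_sim; [exact: facQ_pos (ltn_ord i)|exact: rowl_pos|].
move=> k hk; have := hc i i k 0%N hk (leq0n _); rewrite /Dl /cst => ->.
by apply: slope_ext => e; rewrite -/(Dl a0 i i k 0) Dl_a0.
Qed.
Lemma geom0 (z : C) n : z ^+ n = 1 -> z != 1 -> \sum_(t < n) z ^+ t = 0.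
Proof.
move=> hn z1.
have h : (z - 1) * \sum_(t < n) z ^+ t = z ^+ n - 1.
  elim: n {hn} => [|n IH]; first by rewrite big_ord0 mulr0 expr0 subrr.
  by rewrite big_ord_recr /= mulrDr IH exprS mulrBl mul1r addrC -addrA addKr.
move: h; rewrite hn subrr => /eqP; rewrite mulf_eq0 subr_eq0 (negbTE z1) /=.
by move/eqP.
Qed.

Definition Nw (i : 'I_m) : nat := (mult Q i * ram (fac Q i))%N.
Definition trf (a : 'M[C]_(m, s)) (j : 'I_s) : C := \sum_(i < m) (Nw i)%:R * a i j.
Lemma trace_coef_gr a (j : 'I_s) : Cond a ->
  coef (etrace (Qa a)) (gr j) = if (r %| j.+1)%N then trf a j else 0.
Proof.
move=> hc; rewrite coef_trace; case: ifP => h.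
  apply: eq_bigr => i _; rewrite emk_gr_int // coef_rowl Cond_ram //.
  under eq_bigr do rewrite expr1n mul1r.
  by rewrite sumr_const card_ord -[a i j *+ _]mulr_natl mulrA -natrM.
apply: big1 => i _; rewrite -mulr_suml coef_rowl.
have [->|nz] := eqVneq (a i j) 0; first by rewrite !mulr0.
rewrite geom0 ?mul0r ?mulr0 //.
  apply/eqP; rewrite emkX_eq1.
  have [/ram_predP [_ hr] _] := ram_spec (rowl a i).
  by apply: hr; rewrite coef_rowl.
by apply/negP => /eqP /emk_eq1; rewrite gr_int h.
Qed.
Lemma trace_coef_off (a : 'M[C]_(m, s)) e : (forall j : 'I_s, gr j != e) -> coef (etrace (Qa a)) e = 0.
Proof.
move=> h; rewrite coef_trace big1 // => i _.
by rewrite big1 ?mulr0 // => t _; rewrite coef_rowl0 ?mulr0.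
Qed.

Lemma SB_iff a : Cond a -> (eqexp (etrace (Qa a)) [::] <->
  forall j : 'I_s, (r %| j.+1)%N -> trf a j = 0).
Proof.
move=> hc; split.
  by move=> he j hj; have := he (gr j); rewrite trace_coef_gr // hj coef_nil.
move=> h e; rewrite coef_nil.
have [/existsP [j /eqP <-]|/existsPn nj] := boolP [exists j : 'I_s, gr j == e].
  by rewrite trace_coef_gr //; case: ifP => // /h.
exact: trace_coef_off.
Qed.
Definition Ntot : C := \sum_(i < m) (Nw i)%:R.
Definition pr (a : 'M[C]_(m, s)) (j : 'I_s) : C :=
  if (r %| j.+1)%N then trf a j / Ntot else 0.

Lemma Nw_gt0 i : (0 < Nw i)%N.
Proof. by rewrite /Nw muln_gt0 ram_gt0 andbT; case: HQ => hm _ _; apply: hm. Qed.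

Lemma Ntot_neq0 (i : 'I_m) : Ntot != 0.
Proof.
rewrite /Ntot -natr_sum pnatr_eq0 -lt0n (bigD1 i) //=.
by rewrite (leq_trans (Nw_gt0 i)) // leq_addr.
Qed.

Lemma intp_pr a : intp (pr a).
Proof. by move=> j /negbTE h; rewrite /pr h. Qed.

Lemma trf_shift a p j : trf (shift a p) j = trf a j - Ntot * p j.
Proof.
rewrite /trf /Ntot mulr_suml -sumrB; apply: eq_bigr => i _.
by rewrite mxE mulrBr.
Qed.
Lemma trf_g a (j : 'I_s) : (r %| j.+1)%N -> trf (shift a (pr a)) j = 0.
Proof.
move=> h; rewrite trf_shift /pr h.
have [N0|Nn0] := eqVneq Ntot 0.
  rewrite N0 mul0r subr0 /trf; apply: big1 => i _.
  by have := Ntot_neq0 i; rewrite N0 eqxx.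
by rewrite mulrC divfK // subrr.
Qed.

Lemma pr_SB a : (forall j : 'I_s, (r %| j.+1)%N -> trf a j = 0) -> pr a =1 (fun _ => 0).
Proof. by move=> h j; rewrite /pr; case: ifP => // /h ->; rewrite mul0r. Qed.

Lemma shift0 a : shift a (fun _ => 0) = a.
Proof. by apply/matrixP => i j; rewrite mxE subr0. Qed.

Lemma shift_ext a p q : p =1 q -> shift a p = shift a q.
Proof. by move=> h; apply/matrixP => i j; rewrite !mxE h. Qed.
Lemma cabs_sum (I : Type) (rs : seq I) (P : pred I) (F : I -> C) :
  cabs (\sum_(i <- rs | P i) F i) <= \sum_(i <- rs | P i) cabs (F i).
Proof.
elim/big_rec2: _ => [|i y1 y2 _ h]; first by rewrite cabs0.
by apply: le_trans (cabsD _ _) _; rewrite lerD2l.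
Qed.

Lemma cabs_nat (n : nat) : cabs (n%:R : C) = n%:R.
Proof.
have -> : (n%:R : C) = ((n%:R : R)%:C)%C by rewrite rmorph_nat.
by rewrite cabs_real normr_nat.
Qed.

Lemma mdist_ge0 (x y : 'M[C]_(m, s)) : 0 <= mdist x y.
Proof. by apply: sumr_ge0 => i _; apply: sumr_ge0 => j _; apply: cabs_ge0. Qed.

Lemma entry_le_mdist (x y : 'M[C]_(m, s)) i j : cabs (x i j - y i j) <= mdist x y.
Proof.
rewrite /mdist (bigD1 i) //= (bigD1 j) //= -addrA lerDl.
apply: addr_ge0; first by apply: sumr_ge0 => j' _; apply: cabs_ge0.
by apply: sumr_ge0 => i' _; apply: sumr_ge0 => j' _; apply: cabs_ge0.
Qed.

Lemma mdist_sym (x y : 'M[C]_(m, s)) : mdist x y = mdist y x.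
Proof. by apply: eq_bigr => i _; apply: eq_bigr => j _; apply: cabsB. Qed.

Lemma mdist_xx (x : 'M[C]_(m, s)) : mdist x x = 0.
Proof. by apply: big1 => i _; apply: big1 => j _; rewrite subrr cabs0. Qed.
Lemma shift_dist x y p q : mdist (shift x p) (shift y q) <=
  mdist x y + m%:R * \sum_j cabs (p j - q j).
Proof.
apply: le_trans (_ : _ <= \sum_i \sum_j (cabs (x i j - y i j) + cabs (p j - q j))) _.
  apply: ler_sum => i _; apply: ler_sum => j _; rewrite !mxE.
  have -> : x i j - p j - (y i j - q j) = (x i j - y i j) + - (p j - q j) by ring.
  by apply: le_trans (cabsD _ _) _; rewrite cabsN.
rewrite (eq_bigr (fun i => \sum_j cabs (x i j - y i j) + \sum_j cabs (p j - q j))).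
  by rewrite big_split /= sumr_const card_ord mulr_natl.
by move=> i _; rewrite big_split.
Qed.
Lemma pr_lip : exists2 L : R, 0 <= L &
  forall x y, \sum_j cabs (pr x j - pr y j) <= L * mdist x y.
Proof.
set W : R := (\sum_i Nw i)%:R.
exists (cabs (Ntot^-1) * W); first by rewrite mulr_ge0 ?cabs_ge0 ?ler0n.
move=> x y.
have hj : forall j, cabs (pr x j - pr y j) <= cabs (Ntot^-1) * W * \sum_i cabs (x i j - y i j).
  move=> j; rewrite /pr; case: ifP => _; last first.
    by rewrite subrr cabs0 mulr_ge0 ?mulr_ge0 ?cabs_ge0 ?ler0n // sumr_ge0 // => i _; apply: cabs_ge0.
  rewrite -mulrBl cabsM mulrC -mulrA ler_wpM2l ?cabs_ge0 //.
  rewrite /trf -sumrB; apply: le_trans (cabs_sum _ _ _) _.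
  rewrite mulr_sumr; apply: ler_sum => i _; rewrite -mulrBr cabsM cabs_nat.
  apply: ler_wpM2r; first exact: cabs_ge0.
  by rewrite /W ler_nat (bigD1 i) //= leq_addr.
apply: le_trans (ler_sum _ (fun j _ => hj j)) _.
by rewrite -mulr_sumr /mdist exchange_big.
Qed.
Lemma cabs_lerp (t u : R) (x y : C) : 0 <= u <= 1 ->
  cabs (((1 - t)%:C)%C * x - ((1 - u)%:C)%C * y) <= `|t - u| * cabs x + cabs (x - y).
Proof.
move=> /andP[u0 u1].
have -> : ((1 - t)%:C)%C * x - ((1 - u)%:C)%C * y =
    ((u - t)%:C)%C * x + ((1 - u)%:C)%C * (x - y).
  by rewrite !rmorphB rmorph1; ring.
apply: le_trans (cabsD _ _) _; rewrite !cabsM !cabs_real distrC lerD2l.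
rewrite ger0_norm ?subr_ge0 //.
rewrite -[X in _ <= X]mul1r ler_wpM2r ?cabs_ge0 //; lra.
Qed.

Definition gmap (a : 'M[C]_(m, s)) := shift a (pr a).
Definition Hmap (a : 'M[C]_(m, s)) (t : R) := shift a (fun j => ((1 - t)%:C)%C * pr a j).

Lemma Bsp_iff a : Bsp a <-> Cond a.
Proof. split; [exact: Bsp_Cond|exact: Cond_Bsp]. Qed.

Lemma SBsp_iff a : SBsp a <-> Cond a /\ (forall j : 'I_s, (r %| j.+1)%N -> trf a j = 0).
Proof.
split.
  by move=> [/Bsp_Cond hc ht]; split => //; apply/SB_iff.
by move=> [hc ht]; split; [exact: Cond_Bsp | apply/SB_iff].
Qed.

Lemma Hmap_B a t : Bsp a -> Bsp (Hmap a t).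
Proof.
move/Bsp_Cond => hc; apply: Cond_Bsp; apply/Cond_shift => //.
by move=> j hj; rewrite intp_pr ?mulr0.
Qed.

Lemma gmap_SB a : Bsp a -> SBsp (gmap a).
Proof.
move/Bsp_Cond => hc.
have hc' : Cond (gmap a) by apply/Cond_shift => //; exact: intp_pr.
by apply/SBsp_iff; split => // j hj; apply: trf_g.
Qed.

Lemma gmap_id a : SBsp a -> gmap a = a.
Proof.
move/SBsp_iff => [_ ht]; rewrite /gmap (shift_ext _ (pr_SB ht)); exact: shift0.
Qed.

Lemma Hmap0 a : Hmap a 0 = gmap a.
Proof. by apply: shift_ext => j; rewrite subr0 rmorph1 mul1r. Qed.

Lemma Hmap1 a : Hmap a 1 = a.
Proof.
rewrite /Hmap (shift_ext _ (_ : _ =1 fun _ => 0)) ?shift0 //.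
by move=> j; rewrite subrr rmorph0 mul0r.
Qed.
Lemma homot_equiv : homotopy_equiv (@SBsp R Q) (@Bsp R Q).
Proof.
have [L L0 hL] := pr_lip.
exists id, gmap; split.
- split; last by move=> x [].
  by move=> x _ e e0; exists e => // y _ /=.
- split; last exact: gmap_SB.
  move=> x _ e e0; exists (e / (1 + m%:R * L)).
    by rewrite divr_gt0 // ltr_pwDl // mulr_ge0.
  move=> y _ hxy; apply: le_lt_trans (shift_dist _ _ _ _) _.
  apply: le_lt_trans (_ : _ <= mdist x y + m%:R * (L * mdist x y)) _.
    by rewrite lerD2l ler_wpM2l.
  have h1 : 0 < 1 + m%:R * L by rewrite ltr_pwDl // mulr_ge0.
  by rewrite mulrA -[X in X + _]mul1r -mulrDl mulrC -ltr_pdivlMr.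
- exists (fun x _ => x); split.
  + by move=> x t hx _.
  + by move=> x hx /=; rewrite gmap_id.
  + by [].
  + by move=> x t _ _ e e0; exists e => // y u _ _ hxy _.
- exists Hmap; split.
  + by move=> x t hx _; apply: Hmap_B.
  + by move=> x _; rewrite Hmap0.
  + by move=> x _; rewrite Hmap1.
  move=> x t hx ht e e0.
  set P := \sum_j cabs (pr x j).
  have P0 : 0 <= P by apply: sumr_ge0 => j _; apply: cabs_ge0.
  have D0 : 0 < 1 + m%:R * L + m%:R * P by rewrite -addrA ltr_pwDl // addr_ge0 // mulr_ge0.
  exists (e / (1 + m%:R * L + m%:R * P)); first by rewrite divr_gt0.
  move=> y u hy hu hxy htu; apply: le_lt_trans (shift_dist _ _ _ _) _.
  have hs : \sum_j cabs (((1 - t)%:C)%C * pr x j - ((1 - u)%:C)%C * pr y j) <=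
      `|t - u| * P + L * mdist x y.
    apply: le_trans (ler_sum _ (fun j _ => cabs_lerp t (pr x j) (pr y j) hu)) _.
    by rewrite big_split /= -mulr_sumr lerD2l hL.
  apply: le_lt_trans (_ : _ <= mdist x y + m%:R * (`|t - u| * P + L * mdist x y)) _.
    by rewrite lerD2l ler_wpM2l ?ler0n.
  move: hxy htu; set M := mdist x y; set d := e / _ => hM htu.
  have hdD : d * (1 + m%:R * L + m%:R * P) = e by rewrite divfK // gt_eqF.
  have M0 : 0 <= M := mdist_ge0 x y.
  have tu0 : 0 <= `|t - u| := normr_ge0 _.
  have mL : 0 <= m%:R * L by rewrite mulr_ge0.
  have mP : 0 <= m%:R * P by rewrite mulr_ge0.
  have d0 : 0 < d by rewrite divr_gt0.
  have h1 : M * (m%:R * L) <= d * (m%:R * L) by rewrite ler_wpM2r // ltW.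
  have h2 : `|t - u| * (m%:R * P) <= d * (m%:R * P) by rewrite ler_wpM2r // ltW.
  rewrite -hdD; nra.
Qed.
Definition dot (a W : 'M[C]_(m, s)) : C := \sum_i \sum_j a i j * W i j.

Lemma dot_comb (a : 'M[C]_(m, s)) x y i j i' j' :
  dot a (x *: delta_mx i j - y *: delta_mx i' j') = x * a i j - y * a i' j'.
Proof.
transitivity (x * dot a (delta_mx i j) - y * dot a (delta_mx i' j')).
  rewrite /dot !mulr_sumr -sumrB; apply: eq_bigr => i0 _.
  rewrite !mulr_sumr -sumrB; apply: eq_bigr => j0 _; rewrite !mxE; ring.
by rewrite /dot !sum_delta.
Qed.

Lemma dot0 (a : 'M[C]_(m, s)) : dot a 0 = 0.
Proof. by apply: big1 => i _; apply: big1 => j _; rewrite mxE mulr0. Qed.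

Definition Ti := ('I_m * 'I_m * 'I_r.+1 * 'I_r.+1 * 'I_s)%type.
Definition act (t : Ti) : bool :=
  let: (i, j, k, l, j') := t in
  [&& (k <= ram (fac Q i))%N, (l <= ram (fac Q j))%N & cst i j k l < gr j'].
Definition Phi (t : Ti) (a : 'M[C]_(m, s)) : C :=
  let: (i, j, k, l, j') := t in
  emk R (gr j') ^+ k * a i j' - emk R (gr j') ^+ l * a j j'.
Definition Wt (t : Ti) : 'M[C]_(m, s) :=
  let: (i, j, k, l, j') := t in
  if act t then emk R (gr j') ^+ k *: delta_mx i j' - emk R (gr j') ^+ l *: delta_mx j j'
  else 0.

Lemma dot_Wt a t : dot a (Wt t) = if act t then Phi t a else 0.
Proof.
case: t => [[[[i j] k] l] j'] /=; case: ifP => _; last exact: dot0.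
exact: dot_comb.
Qed.

Lemma Phi_coef t a : Phi t a =
  let: (i, j, k, l, j') := t in coef (Dl a i j k l) (gr j').
Proof. by case: t => [[[[i j] k] l] j'] /=; rewrite Dl_coef !coef_rowl. Qed.
Definition Mm : 'M[C]_(m * s, #|{: Ti}|) :=
  \matrix_(idx, t) (mxvec (Wt (enum_val t))) 0 idx.

Lemma mulMm a t : (mxvec a *m Mm) 0 t = dot a (Wt (enum_val t)).
Proof. rewrite mxE; under eq_bigr do rewrite mxE; exact: mxvec_dot. Qed.

Definition Lin a := forall t, act t -> Phi t a = 0.
Lemma kerM_iff a : (mxvec a <= kermx Mm)%MS <-> Lin a.
Proof.
rewrite sub_kermx; split.
  move=> /eqP h t at_; have := congr1 (fun M : 'M[C]_(1, #|{: Ti}|) => M 0 (enum_rank t)) h.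
  by rewrite mulMm enum_rankK dot_Wt at_ mxE.
move=> h; apply/eqP/rowP => t; rewrite mulMm dot_Wt mxE.
by case: ifP => // /h.
Qed.

Lemma Cond_Lin a : Cond a -> Lin a.
Proof.
move=> hc [[[[i j] k] l] j'] /and3P [hk hl hlt]; rewrite Phi_coef.
apply/eqP/negP => /negP /slope_ub; rewrite hc //; rewrite leNgt.
by rewrite hlt.
Qed.
Definition fK : nat := `|Num.floor K|%N.

Lemma K_ge0 : 0 <= K.
Proof. exact: bigmax_ge_id. Qed.

Lemma fK_def : (fK%:Z = Num.floor K).
Proof. by rewrite /fK gez0_abs // floor_ge0 K_ge0. Qed.

Lemma s_def : (s%:Z = Num.floor (r%:Q * K)).
Proof. by rewrite /sQ gez0_abs // floor_ge0 mulr_ge0 ?ler0n ?K_ge0. Qed.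
Lemma nat_le_s (c : nat) : (c%:Q <= r%:Q * K) = (c <= s)%N.
Proof. by rewrite -lez_nat s_def floor_ge_int. Qed.

Lemma nat_le_fK (c : nat) : (c%:Q <= K) = (c <= fK)%N.
Proof. by rewrite -lez_nat fK_def floor_ge_int. Qed.

Lemma jn_lt (n : 'I_fK) : ((r * n.+1).-1 < s)%N.
Proof.
have h : (0 < r * n.+1)%N by rewrite muln_gt0 r_gt0.
rewrite prednK // -nat_le_s PoszM intrM ler_pM2l ?ltr0n ?r_gt0 //.
by rewrite nat_le_fK.
Qed.
Definition jn (n : 'I_fK) : 'I_s := Ordinal (jn_lt n).

Lemma jn_S n : (jn n).+1 = (r * n.+1)%N.
Proof. by rewrite /= prednK // muln_gt0 r_gt0. Qed.

Lemma jn_dvd n : (r %| (jn n).+1)%N.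
Proof. by rewrite jn_S dvdn_mulr. Qed.

Lemma jn_inj : injective jn.
Proof.
move=> n n' h; apply: val_inj; have := congr1 (fun j : 'I_s => j.+1) h.
rewrite !jn_S /= => /eqP; rewrite eqn_pmul2l ?r_gt0 //; by move/eqP => [].
Qed.

Lemma jn_surj (j : 'I_s) : (r %| j.+1)%N -> exists n : 'I_fK, jn n = j.
Proof.
move=> /dvdnP [c hc].
have c0 : (0 < c)%N by move: hc; case: c => //.
have cle : (c <= fK)%N.
  rewrite -nat_le_fK -(ler_pM2l (_ : 0 < r%:Q)) ?ltr0n ?r_gt0 //.
  rewrite -intrM -PoszM mulnC -hc nat_le_s; exact: ltn_ord.
have nlt : (c.-1 < fK)%N by rewrite prednK.
exists (Ordinal nlt); apply: val_inj => /=.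
by rewrite prednK // mulnC -hc.
Qed.
Definition WT (n : 'I_fK) : 'M[C]_(m, s) := \matrix_(i, j) (if j == jn n then (Nw i)%:R else 0).
Definition En (n : 'I_fK) : 'M[C]_(m, s) := \matrix_(i, j) (if j == jn n then 1 else 0).
Definition Tm : 'M[C]_(m * s, fK) := \matrix_(idx, n) (mxvec (WT n)) 0 idx.
Definition Vm : 'M[C]_(fK, m * s) := \matrix_(n, idx) (mxvec (En n)) 0 idx.

Lemma dot_WT a n : dot a (WT n) = trf a (jn n).
Proof.
rewrite /dot /trf; apply: eq_bigr => i _.
rewrite (bigD1 (jn n)) //= big1 ?addr0; first by rewrite mxE eqxx mulrC.
by move=> j nj; rewrite mxE (negbTE nj) mulr0.
Qed.

Lemma mulTm a n : (mxvec a *m Tm) 0 n = trf a (jn n).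
Proof. rewrite mxE; under eq_bigr do rewrite mxE; by rewrite mxvec_dot -/(dot _ _) dot_WT. Qed.

Lemma Phi_En t n : act t -> Phi t (En n) = 0.
Proof.
case: t => [[[[i j] k] l] j'] _ /=; rewrite !mxE.
case: eqP => [->|_]; last by rewrite !mulr0 subrr.
by rewrite emk_gr_int ?jn_dvd // !expr1n subrr.
Qed.

Lemma VmMm : Vm *m Mm = 0.
Proof.
apply/matrixP => n t; rewrite !mxE.
under eq_bigr do rewrite !mxE.
rewrite mxvec_dot -/(dot _ _) dot_Wt; case: ifP => // h.
exact: Phi_En.
Qed.

Lemma VmTm : Vm *m Tm = Ntot%:M.
Proof.
apply/matrixP => n n'; rewrite !mxE.
under eq_bigr do rewrite !mxE.
rewrite mxvec_dot -/(dot _ _) dot_WT /trf /Ntot.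
have [<-|nn] := eqVneq n n'.
  by rewrite mulr1n; apply: eq_bigr => i _; rewrite mxE eqxx mulr1.
rewrite mulr0n; apply: big1 => i _; rewrite mxE.
by rewrite (inj_eq jn_inj) eq_sym (negbTE nn) mulr0.
Qed.
Definition Mp := row_mx Mm Tm.

Lemma kerMp_iff a : (mxvec a <= kermx Mp)%MS <-> Lin a /\ (forall n, trf a (jn n) = 0).
Proof.
rewrite sub_kermx mul_mx_row row_mx_eq0 -sub_kermx; split.
  move=> /andP [/kerM_iff hl /eqP ht]; split => // n.
  by have := congr1 (fun M : 'M[C]_(1, fK) => M 0 n) ht; rewrite mulTm mxE.
move=> [hl ht]; apply/andP; split; first exact/kerM_iff.
by apply/eqP/rowP => n; rewrite mulTm ht mxE.
Qed.
Lemma m_pos : (0 < fK)%N -> (0 < m)%N.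
Proof.
rewrite !lt0n; apply: contra => /eqP /size0nil hQ.
by apply/eqP; rewrite /fK /KQ hQ big_nil floor0.
Qed.

Lemma VT p (Y : 'M[C]_(p, fK)) : Y *m (Ntot^-1 *: (Vm *m Tm)) = Y.
Proof.
have [fK0|fKp] := posnP fK.
  by apply/matrixP => i j; have := ltn_ord j; rewrite {2}fK0.
have Nn0 : Ntot != 0 by apply: Ntot_neq0 (Ordinal (m_pos fKp)).
by rewrite VmTm scale_scalar_mx mulVf // mulmx1.
Qed.
Lemma rank_split : \rank (kermx Mm) = (\rank (kermx Mp) + fK)%N.
Proof.
set U := kermx Mp.
have UMp : U *m Mp = 0 := mulmx_ker Mp.
have : U *m Mp == 0 by rewrite UMp.
rewrite /Mp mul_mx_row row_mx_eq0 => /andP [/eqP UM /eqP UT].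
have sVk : (Vm <= kermx Mm)%MS by rewrite sub_kermx VmMm.
have sUk : (U <= kermx Mm)%MS by rewrite sub_kermx UM.
have sk : (kermx Mm <= U + Vm)%MS.
  set X := kermx Mm; set c := Ntot^-1.
  have XM : X *m Mm = 0 := mulmx_ker Mm.
  have -> : X = X *m (1%:M - Tm *m (c *: Vm)) + X *m Tm *m (c *: Vm).
    by rewrite mulmxBr mulmx1 mulmxA subrK.
  apply: addmx_sub_adds.
    have e1 : Tm *m (c *: Vm) *m Mm = 0 by rewrite -mulmxA -scalemxAl VmMm scaler0 mulmx0.
    have e2 : X *m (Tm *m (c *: Vm) *m Tm) = X *m Tm by rewrite -mulmxA -scalemxAl mulmxA VT.
    rewrite sub_kermx /Mp mul_mx_row row_mx_eq0; apply/andP; split.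
      by rewrite -mulmxA mulmxBl mul1mx e1 subr0 XM.
    by rewrite -mulmxA mulmxBl mul1mx mulmxBr e2 subrr.
  by rewrite -scalemxAr scalemxAl submxMl.
have sk2 : (U + Vm <= kermx Mm)%MS by rewrite addsmx_sub sUk sVk.
have eqUV : \rank (U + Vm)%MS = \rank (kermx Mm).
  by apply/eqP; rewrite eqn_leq !mxrankS.
have cap0 : \rank (U :&: Vm)%MS = 0%N.
  apply/eqP; rewrite mxrank_eq0; set Z := (U :&: Vm)%MS.
  have /submxP [D hD] : (Z <= Vm)%MS := capmxSr _ _.
  have /submxP [D' hD'] : (Z <= U)%MS := capmxSl _ _.
  have ZT : Z *m Tm = 0 by rewrite hD' -mulmxA UT mulmx0.
  have D0 : D = 0.
    by rewrite -(VT D) -scalemxAr mulmxA -hD ZT scaler0.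
  by rewrite hD D0 mul0mx.
have rV : \rank Vm = fK.
  apply/eqP; rewrite eqn_leq rank_leq_row /=.
  have e3 : Vm *m (Ntot^-1 *: Tm) = 1%:M by rewrite -scalemxAr -[LHS]mul1mx VT.
  have := mxrankM_maxl Vm (Ntot^-1 *: Tm).
  by rewrite e3 mxrank1.
have := mxrank_sum_cap U Vm; rewrite cap0 rV addn0 => <-.
by rewrite eqUV.
Qed.
Lemma ram_le_r (i : 'I_m) : (ram (fac Q i) <= r)%N.
Proof. apply: dvdn_leq r_gt0 _; exact: biglcm_dvd (mem_nth _ (ltn_ord i)). Qed.

Lemma coef_Dl_off a i j k l e : (forall j' : 'I_s, gr j' != e) -> coef (Dl a i j k l) e = 0.
Proof. by move=> h; rewrite Dl_coef !coef_rowl0 // !mulr0 subrr. Qed.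

Lemma cst_grid i j k l : cst i j k l != 0 -> exists jc : 'I_s, gr jc = cst i j k l.
Proof.
move=> nz; case: (slope_att (Dl a0 i j k l)) => [h|h]; first by move: nz; rewrite /cst h eqxx.
have [/existsP [jc /eqP hj]|/existsPn nj] := boolP [exists jc : 'I_s, gr jc == cst i j k l].
  by exists jc.
by move: h; rewrite coef_Dl_off ?eqxx.
Qed.
Lemma near_diff x y i j k l (jc : 'I_s) :
  cabs (coef (Dl y i j k l) (gr jc) - coef (Dl x i j k l) (gr jc)) <= 2 * mdist x y.
Proof.
rewrite !Dl_coef !coef_rowl.
have -> : emk R (gr jc) ^+ k * y i jc - emk R (gr jc) ^+ l * y j jc -
    (emk R (gr jc) ^+ k * x i jc - emk R (gr jc) ^+ l * x j jc) =
    emk R (gr jc) ^+ k * (y i jc - x i jc) + - (emk R (gr jc) ^+ l * (y j jc - x j jc)).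
  by ring.
apply: le_trans (cabsD _ _) _; rewrite cabsN !cabsM !emkX !cabs_emk !mul1r mulr2n mulrDl mul1r.
by apply: lerD; rewrite cabsB; apply: entry_le_mdist.
Qed.
Definition Tq := ('I_m * 'I_m * 'I_r.+1 * 'I_r.+1)%type.
Definition validq (q : Tq) : bool :=
  let: (i, j, k, l) := q in
  [&& (k <= ram (fac Q i))%N, (l <= ram (fac Q j))%N & cst i j k l != 0].
Definition valq (x : 'M[C]_(m, s)) (q : Tq) : R :=
  let: (i, j, k, l) := q in cabs (coef (Dl x i j k l) (cst i j k l)).
Definition eps x : R := \big[Num.min/1]_(q | validq q) (valq x q / 2).

Lemma eps_pos x : Cond x -> 0 < eps x.
Proof.
move=> hc; rewrite /eps; elim/big_ind: _ => //.
  by move=> u v hu hv; rewrite lt_min hu hv.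
move=> [[[i j] k] l] /and3P [hk hl nz] /=.
rewrite divr_gt0 // lt_def cabs_ge0 andbT; apply/eqP => /cabs_eq0 h0.
case: (slope_att (Dl x i j k l)); rewrite hc //.
  by move=> h; move: nz; rewrite h eqxx.
by rewrite h0 eqxx.
Qed.

Lemma eps_le x q : validq q -> eps x <= valq x q / 2.
Proof. by move=> h; rewrite /eps; apply: bigmin_le_cond. Qed.
Lemma open_cond x y : Cond x -> Lin y -> mdist x y < eps x -> Cond y.
Proof.
move=> hc hly hd i j k l hk hl.
have kr : (k < r.+1)%N by rewrite ltnS (leq_trans hk (ram_le_r i)).
have lr : (l < r.+1)%N by rewrite ltnS (leq_trans hl (ram_le_r j)).
apply: slope_char.
- exact: slope_ge0.
- move=> e nz.
  have [/existsP [j' /eqP hj]|/existsPn nj] := boolP [exists j' : 'I_s, gr j' == e];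
    last by move: nz; rewrite coef_Dl_off // eqxx.
  rewrite -hj leNgt; apply/negP => hlt.
  have hact : act (i, j, Ordinal kr, Ordinal lr, j') by rewrite /act /= hk hl hlt.
  have := hly _ hact; rewrite Phi_coef /= hj => h0.
  by rewrite h0 eqxx in nz.
- have [c0|cn0] := eqVneq (cst i j k l) 0; [by left | right].
  have [jc hjc] := cst_grid cn0.
  have hv : validq (i, j, Ordinal kr, Ordinal lr) by rewrite /validq /= hk hl cn0.
  have := eps_le x hv; rewrite /valq /= => hv'.
  apply/negP => /eqP hy.
  have := near_diff x y i j k l jc; rewrite hjc hy sub0r cabsN => hle.
  move: hv' hle hd; set v := cabs _; set dd := mdist x y; set ee := eps x.
  clearbody v dd ee; move=> h1 h2 h3.
  have h4 : 2 * ee <= v by move: h1; clear; move=> h1; lra.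
  have : v < v by apply: le_lt_trans h2 _; apply: lt_le_trans h4; rewrite ltr_pM2l.
  by rewrite ltxx.
Qed.
Lemma Cond_a0 : Cond a0.
Proof. by move=> i j k l _ _. Qed.

Lemma open_B : open_in_subspace_dim (@Bsp R Q) (\rank (kermx Mm)).
Proof.
split; first by exists a0; apply: Cond_Bsp; exact: Cond_a0.
exists (m * s)%N, (kermx Mm); split => //.
  by move=> x /Bsp_Cond hc; apply/kerM_iff; apply: Cond_Lin.
move=> x /Bsp_Cond hc; exists (eps x); first exact: eps_pos.
move=> y /kerM_iff hl hd; apply: Cond_Bsp; exact: open_cond hc hl hd.
Qed.

Lemma open_SB : open_in_subspace_dim (@SBsp R Q) (\rank (kermx Mp)).
Proof.
split; first by exists (gmap a0); apply: gmap_SB; apply: Cond_Bsp; exact: Cond_a0.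
exists (m * s)%N, (kermx Mp); split => //.
  move=> x /SBsp_iff [hc ht]; apply/kerMp_iff; split; first exact: Cond_Lin.
  by move=> n; apply: ht; apply: jn_dvd.
move=> x /SBsp_iff [hc ht]; exists (eps x); first exact: eps_pos.
move=> y /kerMp_iff [hl htn] hd; apply/SBsp_iff; split; first exact: open_cond hc hl hd.
by move=> j /jn_surj [n <-]; apply: htn.
Qed.

Lemma main_sec : homotopy_equiv (@SBsp R Q) (@Bsp R Q) /\
  exists dB dSB : nat,
    [/\ open_in_subspace_dim (@Bsp R Q) dB,
        open_in_subspace_dim (@SBsp R Q) dSB &
        dSB%:Z = dB%:Z - Num.floor (KQ Q)].
Proof.
split; first exact: homot_equiv.
exists (\rank (kermx Mm)), (\rank (kermx Mp)); split.
- exact: open_B.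
- exact: open_SB.
by rewrite rank_split -fK_def PoszD addrK.
Qed.

End Main.

Theorem mainTheorem9 (R : realType) (Q : pit R) :
  is_pit Q ->
  homotopy_equiv (@SBsp R Q) (@Bsp R Q) /\
  exists dB dSB : nat,
    [/\ open_in_subspace_dim (@Bsp R Q) dB,
        open_in_subspace_dim (@SBsp R Q) dSB &
        dSB%:Z = dB%:Z - Num.floor (KQ Q)].
Proof. by move=> HQ; apply: main_sec. Qed.
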